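(* For every integer $n$ with $1\le n\le N$ and every $\delta\in(0,1]$, with probability at least $1-\delta$, \[ \frac{\sum_{t=1}^n (X_t-\mu)}{n}\le (b-a)\sqrt{\frac{\rho_n\log(1/\delta)}{2n}}. \]
   Context: Let $N\ge 2$ and let $\mathcal X=(x_1,\dots,x_N)$ be a finite population of real numbers (repetitions allowed). Let $(X_1,\dots,X_N)=(x_{\pi(1)},\dots,x_{\pi(N)})$, where $\pi$ is a uniformly random permutation of $\{1,\dots,N\}$. For $n\le N$, $(X_1,\dots,X_n)$ is therefore a sample of size $n$ drawn uniformly without replacement from $\mathcal X$. Let $\mu=\frac1N\sum_{i=1}^N x_i$, $a=\min_i x_i$ and $b=\max_i x_i$. Define \[ \rho_n=\begin{cases}1-\frac{n-1}{N} & \text{if } n\le N/2,\\[2pt] \big(1-\frac nN\big)(1+1/n) & \text{if } n>N/2.\end{cases} \] *)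

(* Defs.v *)
From mathcomp Require Import all_boot all_fingroup.
From Stdlib Require Import Reals.
Set Implicit Arguments. Unset Strict Implicit. Unset Printing Implicit Defensive.

(* Population x_1..x_N is represented by x 0, ..., x (N-1). *)
Definition pop_mean (N : nat) (x : nat -> R) : R :=
  Rdiv (\big[Rplus/0%R]_(i < N) x (nat_of_ord i)) (INR N).
Definition pop_min (N : nat) (x : nat -> R) : R :=
  \big[Rmin/x 0%N]_(i < N) x (nat_of_ord i).
Definition pop_max (N : nat) (x : nat -> R) : R :=
  \big[Rmax/x 0%N]_(i < N) x (nat_of_ord i).

(* rho_n ; "n <= N/2" is equivalent to 2n <= N *)
Definition rho (N n : nat) : R :=
  if (n.*2 <= N)%N then (1 - (INR n - 1) / INR N)%R
  else ((1 - INR n / INR N) * (1 + 1 / INR n))%R.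

Definition perm_prob (N : nat) (E : 'S_N -> bool) : R :=
  Rdiv (INR #|[set s : 'S_N | E s]|) (INR #|[set: 'S_N]|).

(* sum_{t=1}^n (X_t - mu) with X_t = x_{pi(t)}; 0-based: t = 0..n-1 *)
Definition centered_sum (N n : nat) (x : nat -> R) (s : 'S_N) : R :=
  \big[Rplus/0%R]_(t < N | (nat_of_ord t < n)%N)
     (x (nat_of_ord (s t)) - pop_mean N x)%R.

(* Main.v *)
Require Import Defs.
From HB Require Import structures.
From mathcomp Require Import all_boot all_fingroup.
From Stdlib Require Import Reals.
From Stdlib Require Import Lra Lia Psatz.
From Coquelicot Require Coquelicot.
Module An.
Import Coquelicot.Coquelicot.
Open Scope R_scope.

Section S.
Variable p : R.
Hypothesis Hp : 0 <= p <= 1.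

Lemma div_le a b c : 0 < c -> a <= b*c -> a/c <= b.
Proof. intros Hc H. unfold Rdiv. apply Rmult_le_reg_r with c; auto.
rewrite Rmult_assoc Rinv_l; lra. Qed.
Lemma exp_le x y : x <= y -> exp x <= exp y.
Proof. intro H; destruct H as [H|H]; [left; apply exp_increasing; auto| rewrite H; lra]. Qed.

Let u h := 1 - p + p * exp h.
Lemma u_pos h : 0 < u h.
Proof.
unfold u. pose proof (exp_pos h).
destruct (Req_dec p 1) as [->|Hn]. lra. nra.
Qed.

Let d1 h := h/4 + p - p * exp h / u h.
Let D h := h^2/8 + h*p - ln (u h).

Lemma d1_der h : is_derive d1 h (/4 - p*(1-p)*exp h / (u h)^2).
Proof.
pose proof (u_pos h) as Hu. unfold d1. unfold u in *.
auto_derive. lra. field. lra.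
Qed.

Lemma D_der h : is_derive D h (d1 h).
Proof.
pose proof (u_pos h) as Hu. unfold D, d1. unfold u in *.
auto_derive. lra. field. lra.
Qed.

Lemma d1'_nonneg h : 0 <= /4 - p*(1-p)*exp h / (u h)^2.
Proof.
pose proof (u_pos h) as Hu. pose proof (exp_pos h).
assert (p*(1-p)*exp h / (u h)^2 <= /4).
{ apply div_le. nra. unfold u. pose proof (pow2_ge_0 (1-p - p*exp h)). nra. }
lra.
Qed.

Lemma d1_0 : d1 0 = 0.
Proof. unfold d1, u. rewrite exp_0. field_simplify; lra. Qed.

Lemma D_0 : D 0 = 0.
Proof. unfold D, u. rewrite exp_0. replace (1 - p + p * 1) with 1 by ring. rewrite ln_1. lra. Qed.

Lemma d1_sign c : (0 <= c -> 0 <= d1 c) /\ (c <= 0 -> d1 c <= 0).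
Proof.
destruct (Req_dec c 0) as [->|Hc]. rewrite d1_0. lra.
destruct (Rlt_le_dec 0 c) as [Hpos|Hneg].
- destruct (MVT_cor2 d1 (fun h => /4 - p*(1-p)*exp h / (u h)^2) 0 c Hpos) as [c' [E _]].
  { intros; apply is_derive_Reals, d1_der. }
  rewrite d1_0 in E. pose proof (d1'_nonneg c'). split; intros; nra.
- assert (Hneg' : c < 0) by lra.
  destruct (MVT_cor2 d1 (fun h => /4 - p*(1-p)*exp h / (u h)^2) c 0 Hneg') as [c' [E _]].
  { intros; apply is_derive_Reals, d1_der. }
  rewrite d1_0 in E. pose proof (d1'_nonneg c'). split; intros; nra.
Qed.

Lemma D_nonneg h : 0 <= D h.
Proof.
destruct (Req_dec h 0) as [->|Hh]. rewrite D_0. lra.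
destruct (Rlt_le_dec 0 h) as [Hpos|Hneg].
- destruct (MVT_cor2 D d1 0 h Hpos) as [c [E Hc]].
  { intros; apply is_derive_Reals, D_der. }
  rewrite D_0 in E. destruct (d1_sign c) as [H1 _]. pose proof (H1 ltac:(lra)). nra.
- assert (Hneg' : h < 0) by lra.
  destruct (MVT_cor2 D d1 h 0 Hneg') as [c [E Hc]].
  { intros; apply is_derive_Reals, D_der. }
  rewrite D_0 in E. destruct (d1_sign c) as [_ H1]. pose proof (H1 ltac:(lra)). nra.
Qed.

Lemma hoeff_core h : (1-p)*exp(-(h*p)) + p*exp(h*(1-p)) <= exp(h^2/8).
Proof.
pose proof (D_nonneg h) as HD. unfold D in HD. pose proof (u_pos h) as Hu.
replace ((1-p)*exp(-(h*p)) + p*exp(h*(1-p))) with (exp (-(h*p) + ln (u h))).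
- apply exp_le. lra.
- rewrite exp_plus exp_ln; auto. unfold u.
  replace (h*(1-p)) with (-(h*p) + h) by ring. rewrite exp_plus. ring.
Qed.
End S.
End An.

HB.instance Definition _ := Monoid.isComLaw.Build R 0%R Rplus
  (fun a b c => esym (Rplus_assoc a b c)) Rplus_comm Rplus_0_l.

Section Gen.
Local Open Scope R_scope.

Lemma sumR_le_in (I : eqType) (r : seq I) (F G : I -> R) :
  (forall i, i \in r -> F i <= G i) ->
  \big[Rplus/0]_(i <- r) F i <= \big[Rplus/0]_(i <- r) G i.
Proof.
elim: r => [|y r IH] H; first by rewrite !big_nil; lra.
rewrite !big_cons. apply Rplus_le_compat.
- by apply H; rewrite mem_head.
- apply IH => i Hi; apply H; by rewrite inE Hi orbT.
Qed.

Lemma sumR_const (I : Type) (r : seq I) (c : R) :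
  \big[Rplus/0]_(i <- r) c = INR (size r) * c.
Proof.
elim: r => [|y r IH]; first by rewrite big_nil /=; lra.
rewrite big_cons IH; change (size (y :: r)) with (size r).+1; rewrite S_INR; lra.
Qed.

Lemma sumR_scal (I : Type) (r : seq I) (c : R) (F : I -> R) :
  \big[Rplus/0]_(i <- r) (c * F i) = c * \big[Rplus/0]_(i <- r) F i.
Proof.
elim: r => [|y r IH]; first by rewrite !big_nil; lra.
rewrite !big_cons IH; lra.
Qed.

Lemma sumR_affine (I : Type) (r : seq I) (A B : R) (F : I -> R) :
  \big[Rplus/0]_(i <- r) (A + B * F i) = INR (size r) * A + B * \big[Rplus/0]_(i <- r) F i.
Proof.
elim: r => [|y r IH]; first by rewrite !big_nil /=; lra.
rewrite !big_cons IH; change (size (y :: r)) with (size r).+1; rewrite S_INR; lra.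
Qed.

Lemma sumR_subc (I : Type) (r : seq I) (c : R) (F : I -> R) :
  \big[Rplus/0]_(i <- r) (F i - c) = \big[Rplus/0]_(i <- r) F i - INR (size r) * c.
Proof.
elim: r => [|y r IH]; first by rewrite !big_nil /=; lra.
rewrite !big_cons IH; change (size (y :: r)) with (size r).+1; rewrite S_INR; lra.
Qed.

Lemma sumR_nonneg (I : Type) (r : seq I) (F : I -> R) :
  (forall i, 0 <= F i) -> 0 <= \big[Rplus/0]_(i <- r) F i.
Proof.
move=> H; elim: r => [|y r IH]; first by rewrite big_nil; lra.
rewrite big_cons; have := H y; lra.
Qed.

Lemma exp_le x y : x <= y -> exp x <= exp y.
Proof. intro H; destruct H as [H|H]; [left; apply exp_increasing; auto| rewrite H; lra]. Qed.

Lemma conv_exp t u w : 0 <= t <= 1 -> exp (t*u + (1-t)*w) <= t * exp u + (1-t) * exp w.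
Proof.
move=> Ht. set c := t*u + (1-t)*w.
have E1 : exp u = exp c * exp (u - c) by rewrite -exp_plus; f_equal; ring.
have E2 : exp w = exp c * exp (w - c) by rewrite -exp_plus; f_equal; ring.
have I1 := exp_ineq1_le (u - c). have I2 := exp_ineq1_le (w - c).
have P := exp_pos c.
rewrite E1 E2.
have A1 : t * (exp c * (1 + (u - c))) <= t * (exp c * exp (u - c)).
{ apply Rmult_le_compat_l; [lra|]. apply Rmult_le_compat_l; lra. }
have A2 : (1-t) * (exp c * (1 + (w - c))) <= (1-t) * (exp c * exp (w - c)).
{ apply Rmult_le_compat_l; [lra|]. apply Rmult_le_compat_l; lra. }
have : t * (exp c * (1 + (u - c))) + (1-t) * (exp c * (1 + (w - c))) = exp c.
{ rewrite /c; ring. }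
lra.
Qed.

End Gen.

Section Hoef.
Local Open Scope R_scope.
Variable x : nat -> R.

Definition avg (l : seq nat) : R := \big[Rplus/0]_(y <- l) x y / INR (size l).

Lemma hoeff_list (l : seq nat) (a b s : R) :
  leq 1 (size l) -> (forall y, y \in l -> a <= x y <= b) ->
  \big[Rplus/0]_(y <- l) exp (s * (x y - avg l)) <= INR (size l) * exp (s^2 * (b-a)^2 / 8).
Proof.
move=> Hl Hb.
set m := INR (size l). set mu := avg l.
have Hm : 0 < m by apply lt_0_INR; apply/ltP.
have Hsum : \big[Rplus/0]_(y <- l) x y = m * mu by rewrite /mu /avg -/m; field; lra.
have Hlo : m * a <= m * mu.
{ rewrite -Hsum -sumR_const. apply sumR_le_in => i Hi. by have := Hb i Hi; lra. }
have Hhi : m * mu <= m * b.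
{ rewrite -Hsum -sumR_const. apply sumR_le_in => i Hi. by have := Hb i Hi; lra. }
have Ha : a <= mu by apply Rmult_le_reg_l with m.
have Hb' : mu <= b by apply Rmult_le_reg_l with m.
destruct (Req_dec a b) as [Eab|Nab].
- rewrite -/m -sumR_const. apply sumR_le_in => i Hi.
  have := Hb i Hi => Hx. apply exp_le.
  have -> : x i - mu = 0 by lra.
  have -> : b - a = 0 by lra.
  nra.
- have Hab : 0 < b - a by lra.
  set e1 := exp (s * (a - mu)). set e2 := exp (s * (b - mu)).
  set A := (b * e1 - a * e2) / (b - a). set B := (e2 - e1) / (b - a).
  apply Rle_trans with (\big[Rplus/0]_(y <- l) (A + B * x y)).
  { apply sumR_le_in => i Hi. have := Hb i Hi => Hx.
    set t := (b - x i) / (b - a).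
    have Ht : 0 <= t <= 1.
    { rewrite /t; split.
      - apply Rmult_le_pos; [lra| apply Rlt_le, Rinv_0_lt_compat; lra].
      - apply Rmult_le_reg_r with (b - a); first lra.
        rewrite /Rdiv Rmult_assoc Rinv_l; lra. }
    have -> : s * (x i - mu) = t * (s * (a - mu)) + (1 - t) * (s * (b - mu)).
    { rewrite /t; field; lra. }
    apply Rle_trans with (t * e1 + (1 - t) * e2); first by apply conv_exp.
    right. rewrite /t /A /B; field; lra. }
  rewrite sumR_affine -/m Hsum.
  set p := (mu - a) / (b - a). set h := s * (b - a).
  have Hp : 0 <= p <= 1.
  { rewrite /p; split.
    - apply Rmult_le_pos; [lra| apply Rlt_le, Rinv_0_lt_compat; lra].
    - apply Rmult_le_reg_r with (b - a); first lra.
      rewrite /Rdiv Rmult_assoc Rinv_l; lra. }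
  have HC := An.hoeff_core p Hp h.
  have E1 : e1 = exp (- (h * p)) by rewrite /e1 /h /p; f_equal; field; lra.
  have E2 : e2 = exp (h * (1 - p)) by rewrite /e2 /h /p; f_equal; field; lra.
  have E3 : h ^ 2 / 8 = s ^ 2 * (b - a) ^ 2 / 8 by rewrite /h Rpow_mult_distr; reflexivity.
  rewrite -E1 -E2 E3 in HC.
  have -> : m * A + B * (m * mu) = m * ((1 - p) * e1 + p * e2).
  { rewrite /A /B /p; field; lra. }
  apply Rmult_le_compat_l; lra.
Qed.

End Hoef.

Section Mgf.
Local Open Scope R_scope.
Variable x : nat -> R.

Lemma sum_perms_rec (F : seq nat -> R) (l : seq nat) : uniq l -> leq 1 (size l) ->
  \big[Rplus/0]_(t <- permutations l) F t =
  \big[Rplus/0]_(y <- l) \big[Rplus/0]_(t <- permutations (rem y l)) F (y :: t).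
Proof. move=> Hu Hs. by rewrite (perm_big _ (permutationsE Hs)) big_allpairs_dep undup_id. Qed.

Lemma mgf (a b : R) (j : nat) : forall (l : seq nat) (lam : R), uniq l -> leq j.+1 (size l) ->
  (forall y, y \in l -> a <= x y <= b) ->
  \big[Rplus/0]_(t <- permutations l) exp (lam * \big[Rplus/0]_(y <- take j t) (x y - avg x l))
   <= INR (size l)`! * exp (lam^2 * ((b-a)^2/8) * (INR j * (INR (size l) - INR j + 1) / INR (size l))).
Proof.
elim: j => [|j IH] l lam Hu Hj Hb.
- have E : forall t, exp (lam * \big[Rplus/0]_(y <- take 0 t) (x y - avg x l)) = 1.
  { by move=> t; rewrite take0 big_nil Rmult_0_r exp_0. }
  rewrite (eq_bigr (fun _ => 1)); last by move=> t _; apply E.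
  rewrite sumR_const size_permutations //.
  change (INR 0) with 0. rewrite Rmult_0_l /Rdiv Rmult_0_l Rmult_0_r exp_0 !Rmult_1_r.
  by right.
- case Hsz: (size l) Hj => [|m'] // Hj.
  have Hjm : (j < m')%coq_nat by apply/ltP.
  have HjmB : leq j.+1 m' by [].
  rewrite sum_perms_rec //; last by rewrite Hsz.
  set M := INR m'. set J := INR j. set c := (b-a)^2/8.
  have HM : 0 < M by apply lt_0_INR; lia.
  have HJM : J < M by apply lt_INR.
  have HJ : 0 <= J by apply pos_INR.
  set mu := lam * (M - J) / M.
  set K := INR m'`! * exp (lam^2 * c * (J * (M - J + 1) / M)).
  apply Rle_trans with (\big[Rplus/0]_(y <- l) (K * exp (mu * (x y - avg x l)))).
  { apply sumR_le_in => y Hy.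
    set l' := rem y l.
    have Hsz' : size l' = m' by rewrite /l' size_rem // Hsz.
    have Hu' : uniq l' := rem_uniq y Hu.
    have Hb' : forall z, z \in l' -> a <= x z <= b.
    { move=> z Hz; apply Hb; exact: (mem_rem Hz). }
    have IH' := IH l' lam Hu'.
    rewrite Hsz' in IH'. have IH'' := IH' HjmB Hb'.
    have Hsum : \big[Rplus/0]_(z <- l) x z = x y + \big[Rplus/0]_(z <- l') x z.
    { by rewrite (perm_big _ (perm_to_rem Hy)) big_cons. }
    rewrite (eq_big_seq (fun t => exp (mu * (x y - avg x l)) *
               exp (lam * \big[Rplus/0]_(z <- take j t) (x z - avg x l')))).
    - rewrite sumR_scal Rmult_comm /K. apply Rmult_le_compat_r.
      + left; apply exp_pos.
      + exact IH''.
    - move=> t Ht.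
      have Hst : size t = m'.
      { move: Ht; rewrite mem_permutations => /perm_size ->; exact Hsz'. }
      have -> : take j.+1 (y :: t) = y :: take j t by [].
      rewrite big_cons -exp_plus. f_equal.
      rewrite !sumR_subc size_take Hst HjmB /avg Hsum Hsz Hsz' S_INR -/M -/J.
      rewrite /mu. set S1 := \big[Rplus/0]_(z <- l') x z. set S2 := \big[Rplus/0]_(i <- take j t) x i. field. lra. }
  rewrite sumR_scal.
  have HH := hoeff_list x l a b mu.
  rewrite Hsz in HH. have HH' := HH (ltac:(by [])) Hb.
  apply Rle_trans with (K * (INR m'.+1 * exp (mu^2 * (b-a)^2/8))).
  { apply Rmult_le_compat_l; last exact HH'.
    rewrite /K. apply Rmult_le_pos; [apply pos_INR| left; apply exp_pos]. }
  rewrite /K factS mult_INR !S_INR -/M -/J.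
  have Hf : 0 <= INR m'`! by apply pos_INR.
  set A1 := lam ^ 2 * c * (J * (M - J + 1) / M).
  set A2 := mu ^ 2 * (b - a) ^ 2 / 8.
  set A3 := lam ^ 2 * c * ((J + 1) * (M + 1 - (J + 1) + 1) / (M + 1)).
  have HA : A1 + A2 <= A3.
  { have -> : A3 = A1 + A2 + lam^2 * c * (J * (M - J) / ((M + 1) * M^2)).
    { rewrite /A1 /A2 /A3 /mu /c. field. lra. }
    have : 0 <= lam^2 * c * (J * (M - J) / ((M + 1) * M^2)).
    { apply Rmult_le_pos; [apply Rmult_le_pos|].
      - apply pow2_ge_0.
      - rewrite /c; apply Rmult_le_pos; [apply pow2_ge_0| lra].
      - apply Rmult_le_pos; [apply Rmult_le_pos; lra|].
        apply Rlt_le, Rinv_0_lt_compat. apply Rmult_lt_0_compat; [lra| apply pow_lt; lra]. }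
    lra. }
  have HE := exp_le _ _ HA. rewrite exp_plus in HE.
  have P1 := exp_pos A1. have P2 := exp_pos A2.
  have -> : INR m'`! * exp A1 * ((M + 1) * exp A2) = ((M + 1) * INR m'`!) * (exp A1 * exp A2) by ring.
  apply Rmult_le_compat_l; last exact HE.
  apply Rmult_le_pos; lra.
Qed.

End Mgf.

Lemma index_enumE (T : finType) : index_enum T = enum T.
Proof. by rewrite [index_enum T]unlock -enumT. Qed.

Section Glue.
Local Open Scope R_scope.
Variable N : nat.

Definition phi (s : 'S_N) : seq nat := [seq nat_of_ord (s i) | i <- enum 'I_N].

Lemma phi_perm s : perm_eq (phi s) (iota 0 N).
Proof.
rewrite /phi -val_enum_ord.
have -> : [seq nat_of_ord (s i) | i <- enum 'I_N] = map val (map s (enum 'I_N)) by elim: (enum 'I_N) => //= i r ->.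
apply perm_map. apply uniq_perm.
- rewrite map_inj_uniq; [exact: enum_uniq| exact: perm_inj].
- exact: enum_uniq.
- move=> y; rewrite mem_enum; apply/mapP; exists ((s^-1)%g y); first by rewrite mem_enum.
  by rewrite permKV.
Qed.

Lemma phi_inj : injective phi.
Proof.
move=> s1 s2 E; apply/permP => i; apply val_inj.
have H := (eq_in_map _ _ _).2 E.
by apply (H i); rewrite mem_enum.
Qed.

Lemma sum_S_perms (F : seq nat -> R) :
  \big[Rplus/0]_(s : 'S_N) F (phi s) = \big[Rplus/0]_(t <- permutations (iota 0 N)) F t.
Proof.
rewrite -(big_map phi xpredT F).
apply perm_big. apply uniq_perm.
- rewrite map_inj_uniq; [exact: index_enum_uniq| exact: phi_inj].
- exact: permutations_uniq.
- apply uniq_min_size.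
  + rewrite map_inj_uniq; [exact: index_enum_uniq| exact: phi_inj].
  + move=> t /mapP [s _ ->]. by rewrite mem_permutations phi_perm.
  + by rewrite size_map size_permutations ?iota_uniq // size_iota index_enumE -cardT card_Sn.
Qed.

Lemma filter_iota (n : nat) : leq n N -> [seq k <- iota 0 N | leq k.+1 n] = iota 0 n.
Proof.
move=> HnN.
rewrite -(subnKC HnN) iotaD filter_cat add0n.
have -> : [seq k <- iota 0 n | leq k.+1 n] = iota 0 n.
{ apply/all_filterP; apply/allP => k; by rewrite mem_iota. }
have -> : [seq k <- iota n (N - n) | leq k.+1 n] = [::].
{ rewrite (eq_in_filter (a2 := pred0)); first exact: filter_pred0.
  move=> k; rewrite mem_iota => /andP [H _] /=. by rewrite ltnNge H. }
by rewrite cats0.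
Qed.

Lemma cs_take (n : nat) (x : nat -> R) (s : 'S_N) : leq n N ->
  centered_sum n x s = \big[Rplus/0]_(y <- take n (phi s)) (x y - pop_mean N x).
Proof.
move=> HnN.
have E : [seq t <- enum 'I_N | leq (nat_of_ord t).+1 n] = take n (enum 'I_N).
{ apply (@inj_map _ _ val val_inj).
  have F : forall r : seq 'I_N, map val [seq t <- r | leq (nat_of_ord t).+1 n] = [seq k <- map val r | leq k.+1 n].
  { by elim => //= t r IH; case: ifP => _ //=; rewrite IH. }
  by rewrite F map_take val_enum_ord take_iota filter_iota // (minn_idPl HnN). }
rewrite /centered_sum /phi -map_take big_map -E big_filter index_enumE.
by [].
Qed.

Lemma mean_avg (x : nat -> R) : pop_mean N x = avg x (iota 0 N).
Proof.
rewrite /pop_mean /avg size_iota. congr (_ / _).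
by rewrite -(big_mkord xpredT (fun i => x i)) /index_iota subn0.
Qed.

Lemma big_ord_iota (op : R -> R -> R) (F : nat -> R) d m :
  \big[op/d]_(k < m) F (nat_of_ord k) = \big[op/d]_(k <- iota 0 m) F k.
Proof. by rewrite -val_enum_ord big_map index_enumE. Qed.

Lemma bigmin_le (F : nat -> R) d m i : leq i.+1 m -> \big[Rmin/d]_(k < m) F (nat_of_ord k) <= F i.
Proof.
rewrite big_ord_iota => Hi.
have : i \in iota 0 m by rewrite mem_iota.
elim: (iota 0 m) => [|y r IH] //.
rewrite inE big_cons => /orP [/eqP ->|H]; first by apply Rmin_l.
apply Rle_trans with (\big[Rmin/d]_(k <- r) F k); [apply Rmin_r| exact: IH].
Qed.

Lemma bigmax_ge (F : nat -> R) d m i : leq i.+1 m -> F i <= \big[Rmax/d]_(k < m) F (nat_of_ord k).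
Proof.
rewrite big_ord_iota => Hi.
have : i \in iota 0 m by rewrite mem_iota.
elim: (iota 0 m) => [|y r IH] //.
rewrite inE big_cons => /orP [/eqP ->|H]; first by apply Rmax_l.
apply Rle_trans with (\big[Rmax/d]_(k <- r) F k); [exact: IH| apply Rmax_r].
Qed.

Lemma sum_perms_rev (F : seq nat -> R) (l : seq nat) :
  \big[Rplus/0]_(t <- permutations l) F t = \big[Rplus/0]_(t <- permutations l) F (rev t).
Proof.
rewrite -(big_map rev xpredT F). apply perm_big. apply uniq_perm.
- exact: permutations_uniq.
- rewrite map_inj_uniq; [exact: permutations_uniq| exact: (can_inj (@revK _))].
- move=> u. rewrite -{2}(revK u) (mem_map (can_inj (@revK _))) !mem_permutations.
  by rewrite perm_rev.
Qed.

Lemma card_sum (T : finType) (A : {set T}) :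
  INR #|A| = \big[Rplus/0]_(s in A) 1.
Proof.
rewrite big_const. elim: #|A| => [|k IH]; first by [].
rewrite iterS -IH S_INR. lra.
Qed.

End Glue.

Section Main.
Local Open Scope R_scope.
Variables (N : nat) (x : nat -> R).

Lemma bounds i : leq i.+1 N -> pop_min N x <= x i <= pop_max N x.
Proof. move=> Hi; split; [exact: bigmin_le| exact: bigmax_ge]. Qed.

Lemma bounds_iota y : y \in iota 0 N -> pop_min N x <= x y <= pop_max N x.
Proof. rewrite mem_iota => /andP [_ H]; apply bounds; by rewrite add0n in H. Qed.

Lemma total_zero t : t \in permutations (iota 0 N) -> leq 1 N ->
  \big[Rplus/0]_(y <- t) (x y - pop_mean N x) = 0.
Proof.
rewrite mem_permutations => Ht HN.
rewrite sumR_subc (perm_size Ht) (perm_big _ Ht) mean_avg /avg size_iota.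
set S := \big[Rplus/0]_(i <- iota 0 N) x i.
field. apply not_0_INR. by case: N HN.
Qed.

Lemma mgf_full (n : nat) (lam : R) : leq 1 n -> leq n.+1 N ->
  \big[Rplus/0]_(s : 'S_N) exp (lam * centered_sum n x s) <=
  INR N`! * exp (lam^2 * ((pop_max N x - pop_min N x)^2/8) * (INR n * rho N n)).
Proof.
move=> Hn HnN.
have HnN' : leq n N by apply ltnW.
pose G := fun t : seq nat => exp (lam * \big[Rplus/0]_(y <- take n t) (x y - pop_mean N x)).
have -> : \big[Rplus/0]_(s : 'S_N) exp (lam * centered_sum n x s) = \big[Rplus/0]_(s : 'S_N) G (phi N s).
{ apply eq_bigr => s _. by rewrite /G cs_take. }
rewrite (sum_S_perms N G) /G.
have HNp : 0 < INR N by apply lt_0_INR; apply/ltP; apply: (leq_ltn_trans _ HnN).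
have Hnp : 0 < INR n by apply lt_0_INR; apply/ltP.
rewrite mean_avg /rho.
case: ifP => Hc.
- have H := mgf x (pop_min N x) (pop_max N x) n (iota 0 N) lam (iota_uniq 0 N).
  rewrite size_iota in H. have H' := H HnN (@bounds_iota).
  apply (Rle_trans _ _ _ H'). right. f_equal. f_equal.
  set c := (pop_max N x - pop_min N x) ^ 2 / 8. field. repeat split; lra.
- rewrite sum_perms_rev.
  have HNn : leq (N - n).+1 N.
  { rewrite ltn_subrL Hn /=. exact: leq_ltn_trans (leq0n _) HnN. }
  have H := mgf x (pop_min N x) (pop_max N x) (N - n) (iota 0 N) (- lam) (iota_uniq 0 N).
  rewrite size_iota in H. have H' := H HNn (@bounds_iota).
  rewrite (eq_big_seq (fun t => exp (- lam * \big[Rplus/0]_(y <- take (N - n) t) (x y - avg x (iota 0 N))) )).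
  + apply (Rle_trans _ _ _ H'). right. f_equal.
    rewrite minus_INR; last by apply/leP.
    set c := (pop_max N x - pop_min N x) ^ 2 / 8. f_equal. field. repeat split; lra.
  + move=> t Ht. f_equal.
    have Hsz : size t = N.
    { move: Ht; rewrite mem_permutations => /perm_size ->. by rewrite size_iota. }
    have Z := total_zero t Ht (leq_trans Hn HnN').
    rewrite -mean_avg.
    rewrite -(cat_take_drop (N - n) t) big_cat /= in Z.
    rewrite take_rev Hsz big_rev.
    set S1 := \big[Rplus/0]_(y <- take (N - n) t) (x y - pop_mean N x).
    set S2 := \big[Rplus/0]_(y <- drop (N - n) t) (x y - pop_mean N x).
    have HZ : S1 + S2 = 0 by rewrite /S1 /S2; exact Z.
    have -> : S2 = - S1 by lra.
    ring.
Qed.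
End Main.

Section Final.
Local Open Scope R_scope.
Variables (N : nat) (x : nat -> R).

Lemma markov (n : nat) (beta lam : R) : 0 < INR n -> 0 <= lam ->
  INR #|~: [set s : 'S_N | is_left (Rle_dec (centered_sum n x s / INR n) beta)]|
  <= exp (- (lam * (INR n * beta))) * \big[Rplus/0]_(s : 'S_N) exp (lam * centered_sum n x s).
Proof.
move=> Hn Hlam.
rewrite card_sum big_mkcond -sumR_scal.
apply sumR_le_in => s _.
rewrite in_setC in_set.
destruct (Rle_dec (centered_sum n x s / INR n) beta) as [H|H] => /=.
- apply Rlt_le, Rmult_lt_0_compat; apply exp_pos.
- have H1 := Rnot_le_lt _ _ H.
  have H2 : INR n * beta < centered_sum n x s.
  { have -> : centered_sum n x s = INR n * (centered_sum n x s / INR n) by field; lra.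
    apply Rmult_lt_compat_l; lra. }
  rewrite -exp_plus -exp_0. apply exp_le. nra.
Qed.

Lemma all_good (n : nat) (beta : R) : 0 < INR n -> (forall s : 'S_N, centered_sum n x s <= 0) -> 0 <= beta ->
  [set s : 'S_N | is_left (Rle_dec (centered_sum n x s / INR n) beta)] = setT.
Proof.
move=> Hn Hs Hb. apply/setP => s; rewrite !inE.
destruct (Rle_dec (centered_sum n x s / INR n) beta) as [|H] => //.
exfalso; apply H. have := Hs s. have := Rinv_0_lt_compat _ Hn. rewrite /Rdiv. nra.
Qed.

Lemma cs_zero_N (s : 'S_N) : leq 1 N -> centered_sum N x s = 0.
Proof.
move=> HN.
rewrite (cs_take N N x s (leqnn N)) take_oversize; last by rewrite size_map size_enum_ord.
apply (total_zero N x); last exact HN.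
by rewrite mem_permutations phi_perm.
Qed.

Lemma cs_zero_ab n (s : 'S_N) : leq 1 N -> leq n N -> pop_max N x = pop_min N x -> centered_sum n x s = 0.
Proof.
move=> HN HnN Hab.
have Hx : forall y, y \in iota 0 N -> x y = pop_min N x.
{ move=> y Hy. have := bounds_iota N x y Hy. lra. }
have Hmu : pop_mean N x = pop_min N x.
{ rewrite mean_avg /avg (eq_big_seq (fun _ => pop_min N x)) // sumR_const size_iota.
  field. apply not_0_INR. by case: N HN. }
rewrite (cs_take N n x s HnN) (eq_big_seq (fun _ => 0)).
- by rewrite sumR_const Rmult_0_r.
- move=> y Hy. rewrite Hmu Hx; first lra.
  rewrite -(perm_mem (phi_perm N s)). exact: mem_take Hy.
Qed.

Lemma rho_pos n : leq 1 n -> leq n.+1 N -> 0 < rho N n.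
Proof.
move=> Hn HnN.
have HNp : 0 < INR N by apply lt_0_INR; apply/ltP; apply: (leq_ltn_trans _ HnN).
have Hnp : 0 < INR n by apply lt_0_INR; apply/ltP.
have HnNr : INR n < INR N by apply lt_INR; apply/ltP.
rewrite /rho. case: ifP => _.
- set q := (INR n - 1) / INR N.
  have : q * INR N = INR n - 1 by rewrite /q; field; lra.
  nra.
- set q := INR n / INR N.
  have : q * INR N = INR n by rewrite /q; field; lra.
  move=> Hq. apply Rmult_lt_0_compat; first nra.
  have := Rinv_0_lt_compat _ Hnp. rewrite /Rdiv. lra.
Qed.

Lemma main_thm (n : nat) (delta : R) :
  leq 2 N -> leq 1 n -> leq n N -> 0 < delta <= 1 ->
  INR #|~: [set s : 'S_N | is_left (Rle_dec (centered_sum n x s / INR n)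
       ((pop_max N x - pop_min N x) *
        sqrt (rho N n * ln (1 / delta) / (2 * INR n))))]| <= delta * INR N`!.
Proof.
move=> HN Hn HnN Hd.
have HN1 : leq 1 N by apply: leq_trans HN.
set a := pop_min N x. set b := pop_max N x.
set L := ln (1 / delta).
set beta := (b - a) * sqrt (rho N n * L / (2 * INR n)).
have Hnp : 0 < INR n by apply lt_0_INR; apply/ltP.
have HF : 0 < INR N`! by apply lt_0_INR; apply/ltP; apply fact_gt0.
have Hab : a <= b.
{ have := bounds N x 0 HN1. rewrite /a /b. lra. }
have Hbeta : 0 <= beta by apply Rmult_le_pos; [lra| apply sqrt_pos].
have Hgood : (forall s : 'S_N, centered_sum n x s <= 0) ->
   INR #|~: [set s : 'S_N | is_left (Rle_dec (centered_sum n x s / INR n) beta)]| <= delta * INR N`!.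
{ move=> Hs. rewrite all_good // setCT cards0. change (INR 0) with 0.
  apply Rmult_le_pos; lra. }
case: (ltnP n N) => HnN'; last first.
{ have E : n = N by apply/eqP; rewrite eqn_leq HnN HnN'.
  subst n. apply Hgood => s. rewrite cs_zero_N //. lra. }
destruct (Req_dec b a) as [Eab|Nab].
{ apply Hgood => s. rewrite cs_zero_ab //. lra. }
have Hab' : 0 < b - a by lra.
have HL : 0 <= L.
{ rewrite /L. destruct (Req_dec delta 1) as [->|Hd1].
  - rewrite /Rdiv Rmult_1_l Rinv_1 ln_1. lra.
  - rewrite -ln_1. left. apply ln_increasing; first lra.
    rewrite /Rdiv Rmult_1_l. rewrite -Rinv_1. apply Rinv_lt_contravar; lra. }
have Hr := rho_pos n Hn HnN'.
set C := (b - a)^2 / 8.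
have HC : 0 < C by rewrite /C; have := pow_lt _ 2 Hab'; lra.
set g := INR n * rho N n.
have Hg : 0 < g by apply Rmult_lt_0_compat.
set B := INR n * beta.
set lam := B / (2 * C * g).
have Hlam : 0 <= lam.
{ rewrite /lam /Rdiv. apply Rmult_le_pos. rewrite /B; nra.
  apply Rlt_le, Rinv_0_lt_compat. nra. }
have HM := markov n beta lam Hnp Hlam.
have HG := mgf_full N x n lam Hn HnN'.
rewrite -/a -/b -/C -/g in HG.
have HB2 : B * B = INR n * (b - a)^2 * rho N n * L / 2.
{ rewrite /B /beta.
  have Hs := sqrt_sqrt (rho N n * L / (2 * INR n)).
  have Hpos : 0 <= rho N n * L / (2 * INR n).
  { apply Rmult_le_pos; [nra| apply Rlt_le, Rinv_0_lt_compat; lra]. }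
  have E : INR n * ((b - a) * sqrt (rho N n * L / (2 * INR n))) * (INR n * ((b - a) * sqrt (rho N n * L / (2 * INR n))))
       = INR n * INR n * (b - a) ^ 2 * (sqrt (rho N n * L / (2 * INR n)) * sqrt (rho N n * L / (2 * INR n))) by ring.
  rewrite E (Hs Hpos). field. lra. }
have Hexp : - (lam * B) + lam ^ 2 * C * g = - L.
{ have -> : - (lam * B) + lam ^ 2 * C * g = - (B * B) / (4 * C * g).
  { rewrite /lam. field. split; lra. }
  rewrite HB2 /C /g. field. split; [lra| split; lra]. }
have Hdelta : exp (- L) = delta.
{ rewrite /L /Rdiv Rmult_1_l ln_Rinv; last lra.
  rewrite Ropp_involutive exp_ln; lra. }
apply Rle_trans with (exp (- (lam * B)) * (INR N`! * exp (lam ^ 2 * C * g))).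
- apply Rle_trans with (1 := HM). apply Rmult_le_compat_l; [left; apply exp_pos| exact HG].
- have -> : exp (- (lam * B)) * (INR N`! * exp (lam ^ 2 * C * g)) =
            INR N`! * (exp (- (lam * B)) * exp (lam ^ 2 * C * g)) by ring.
  rewrite -exp_plus Hexp Hdelta. lra.
Qed.

End Final.

Theorem corollary1 (N : nat) (x : nat -> R) (n : nat) (delta : R) :
  (2 <= N)%N -> (1 <= n)%N -> (n <= N)%N -> (0 < delta <= 1)%R ->
  (perm_prob (fun s : 'S_N =>
     Rle_dec (centered_sum n x s / INR n)
       ((pop_max N x - pop_min N x) *
        sqrt (rho N n * ln (1 / delta) / (2 * INR n)))) >= 1 - delta)%R.
Proof.
move=> HN Hn HnN Hd.
have Hbad := main_thm N x n delta HN Hn HnN Hd.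
rewrite /perm_prob cardsT card_Sn.
set A := [set s : 'S_N | _].
have Htot : (INR #|A| + INR #|~: A| = INR N`!)%R by rewrite -plus_INR; congr INR; exact: (etrans (cardsC A) (card_Sn N)).
have HF : (0 < INR N`!)%R by apply lt_0_INR; apply/ltP; apply fact_gt0.
apply Rle_ge.
have -> : INR #|A| = (INR N`! - INR #|~: A|)%R by lra.
apply (Rmult_le_reg_r (INR N`!)); first exact HF.
rewrite /Rdiv Rmult_assoc Rinv_l; last lra.
rewrite Rmult_1_r. rewrite /A. nra.
Qed.
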